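(* Let $s^1,\ldots,s^k$ be time series with $s^l=(s^l_1,\ldots,s^l_{m_l})\in\mathbb{Q}^{m_l}$. Define \[ U \coloneqq \max_{\substack{I_1,\ldots,I_k\\ I_l=[a_l,b_l],\ 1\le a_l\le b_l\le m_l}} \frac{\sum_{l\in[k]}\sum_{i\in I_l} s^l_i}{\sum_{l\in[k]}|I_l|},\qquad L \coloneqq \min_{\substack{I_1,\ldots,I_k\\ I_l=[a_l,b_l],\ 1\le a_l\le b_l\le m_l}} \frac{\sum_{l\in[k]}\sum_{i\in I_l} s^l_i}{\sum_{l\in[k]}|I_l|}, \] where $[a,b]=\{a,a+1,\ldots,b\}$. Let $z=(z_1,\ldots,z_n)$ be any mean of $s^1,\ldots,s^k$, i.e. a time series minimizing $F(z)=\frac1k\sum_{l=1}^k \mathrm{dtw}(z,s^l)^2$ over all time series. Then $L\le z_j\le U$ for all $j\in[n]$, and for every $l\in[k]$, \[ \mathrm{dtw}(s^l,z)^2\ \ge\ \sum_{i\in[m_l]} \begin{cases} (s^l_i-U)^2 & \text{if } s^l_i>U,\\ (s^l_i-L)^2 & \text{if } s^l_i<L,\\ 0 & \text{otherwise}.\end{cases} \] In particular $F(z)$ is at least $\frac1k$ times the sum over $l\in[k]$ of the right-hand side.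
   Context: A time series is a finite sequence $s=(s_1,\ldots,s_m)\in\mathbb{Q}^m$ for some $m\in\mathbb{N}$; $[m]=\{1,\ldots,m\}$. For $m,n\in\mathbb{N}$, a warping path of order $m\times n$ is a sequence of pairs $(i_1,j_1),\ldots,(i_p,j_p)\in[m]\times[n]$ with $(i_1,j_1)=(1,1)$, $(i_p,j_p)=(m,n)$, and each step $(i_{t+1},j_{t+1})-(i_t,j_t)\in\{(1,0),(0,1),(1,1)\}$. For time series $s\in\mathbb{Q}^m$, $s'\in\mathbb{Q}^n$, the cost of a warping path $P$ is $C_P(s,s')=\sum_{(i,j)\in P}(s_i-s'_j)^2$, and $\mathrm{dtw}(s,s')=\min_P\sqrt{C_P(s,s')}$ over all warping paths of order $m\times n$ (symmetric in the arguments). The Fréchet function of a sample $s^1,\ldots,s^k$ is $F(z)=\frac1k\sum_{l=1}^k\mathrm{dtw}(z,s^l)^2$, defined on all time series $z$ (of any length); a mean is a minimizer of $F$ (one always exists). *)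

(* Defs.v *)
From HB Require Import structures.
From mathcomp Require Import all_boot all_order all_algebra.
Set Implicit Arguments. Unset Strict Implicit. Unset Printing Implicit Defensive.
Import Order.TTheory GRing.Theory Num.Theory.
Local Open Scope ring_scope.

(* A time series is a nonempty sequence of rationals; entries are 1-indexed:
   ts_at s i = s_i for 1 <= i <= size s. *)
Definition tseries := seq rat.
Definition ts_at (s : tseries) (i : nat) : rat := nth 0 s i.-1.

Definition wstep (a b : nat * nat) : bool :=
  [|| b == (a.1.+1, a.2), b == (a.1, a.2.+1) | b == (a.1.+1, a.2.+1)].

Definition is_warping_path (m n : nat) (P : seq (nat * nat)) : bool :=
  match P with
  | [::] => false
  | x :: t => [&& x == (1, 1)%N, last x t == (m, n),
                 all (fun q : nat * nat => (1 <= q.1 <= m)%N && (1 <= q.2 <= n)%N) P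
               & path wstep x t]
  end.

Fixpoint gen_paths (k : nat) (x : nat * nat) : seq (seq (nat * nat)) :=
  match k with
  | 0 => [:: [:: x]]
  | k'.+1 => [:: x] :: flatten [seq [seq x :: t | t <- gen_paths k' y]
                               | y <- [:: (x.1.+1, x.2); (x.1, x.2.+1); (x.1.+1, x.2.+1)]]
  end.

(* every warping path of order m x n has at most m+n-1 <= m+n+1 elements, so this
   list contains all warping paths of order m x n *)
Definition warping_paths (m n : nat) : seq (seq (nat * nat)) :=
  [seq P <- gen_paths (m + n) (1, 1)%N | is_warping_path m n P].

Definition path_cost (s s' : tseries) (P : seq (nat * nat)) : rat :=
  \sum_(q <- P) (ts_at s q.1 - ts_at s' q.2) ^+ 2.

(* dtw2 s s' = dtw(s,s')^2 = min over warping paths P of C_P(s,s') *)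
Definition dtw2 (s s' : tseries) : rat :=
  match warping_paths (size s) (size s') with
  | [::] => 0
  | P :: Ps => foldr (fun Q acc => Num.min (path_cost s s' Q) acc) (path_cost s s' P) Ps
  end.

Definition frechet (k : nat) (s : 'I_k -> tseries) (z : tseries) : rat :=
  k%:R^-1 * \sum_(l < k) dtw2 z (s l).

Definition is_mean (k : nat) (s : 'I_k -> tseries) (z : tseries) : Prop :=
  (0 < size z)%N /\
  forall z' : tseries, (0 < size z')%N -> frechet s z <= frechet s z'.

Definition valid_intervals (k : nat) (s : 'I_k -> tseries) (a b : 'I_k -> nat) : Prop :=
  forall l : 'I_k, (1 <= a l)%N /\ (a l <= b l)%N /\ (b l <= size (s l))%N.

Definition interval_ratio (k : nat) (s : 'I_k -> tseries) (a b : 'I_k -> nat) : rat :=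
  (\sum_(l < k) \sum_(a l <= i < (b l).+1) ts_at (s l) i) /
  (\sum_(l < k) ((b l).+1 - a l)%:R).

Definition is_U (k : nat) (s : 'I_k -> tseries) (U : rat) : Prop :=
  (exists a b, valid_intervals s a b /\ interval_ratio s a b = U) /\
  (forall a b, valid_intervals s a b -> interval_ratio s a b <= U).

Definition is_L (k : nat) (s : 'I_k -> tseries) (L : rat) : Prop :=
  (exists a b, valid_intervals s a b /\ interval_ratio s a b = L) /\
  (forall a b, valid_intervals s a b -> L <= interval_ratio s a b).

Definition penalty (U L x : rat) : rat :=
  if U < x then (x - U) ^+ 2 else if x < L then (x - L) ^+ 2 else 0.

Definition lower_bound_l (U L : rat) (t : tseries) : rat :=
  \sum_(1 <= i < (size t).+1) penalty U L (ts_at t i).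

(* Main.v *)
Require Import Defs.
From HB Require Import structures.
From mathcomp Require Import all_boot all_order all_algebra.
From mathcomp Require Import zify ring lra.
Import Order.TTheory GRing.Theory Num.Theory.
Local Open Scope ring_scope.

Lemma wstepP (x y : nat * nat) : wstep x y ->
  [/\ (x.1 <= y.1 <= x.1.+1)%N, (x.2 <= y.2 <= x.2.+1)%N,
      y.1 = x.1 -> y.2 = x.2.+1 & y.2 = x.2 -> y.1 = x.1.+1].
Proof.
case: x y => [x1 x2] [y1 y2] /or3P [] /eqP [-> ->] /=; split; lia.
Qed.

Arguments wstepP {x y}.

Lemma path_mono (x : nat * nat) t : path wstep x t ->
  all (fun q : nat * nat => (x.1 <= q.1)%N && (x.2 <= q.2)%N) t.
Proof.
elim: t x => [|y t IH] x //= /andP [/wstepP [h1 h2 _ _] hp].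
apply/andP; split; first lia.
apply: sub_all (IH _ hp) => q /= /andP[a b]; apply/andP; split; lia.
Qed.

Arguments path_mono {x t}.

Lemma path_last_bound (x : nat * nat) t : path wstep x t ->
  all (fun q : nat * nat => (q.1 <= (last x t).1)%N && (q.2 <= (last x t).2)%N) (x :: t).
Proof.
elim: t x => [|y t IH] x /=; first by rewrite !leqnn.
move=> /andP [/wstepP [h1 h2 _ _] hp].
have := IH _ hp => /= /andP [/andP [a b] ->]; rewrite andbT; apply/andP; split; lia.
Qed.

Arguments path_last_bound {x t}.

Lemma path_surj1 (x : nat * nat) t i : path wstep x t ->
  (x.1 <= i <= (last x t).1)%N -> has (fun q : nat * nat => q.1 == i) (x :: t).
Proof.
elim: t x => [|y t IH] x /=; first by move=> _ h; apply/orP; left; apply/eqP; lia.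
move=> /andP [/wstepP [h1 h2 _ _] hp] hi.
case: (eqVneq x.1 i) => [e|ne] //=.
apply: (IH y hp); lia.
Qed.

Lemma path_surj2 (x : nat * nat) t i : path wstep x t ->
  (x.2 <= i <= (last x t).2)%N -> has (fun q : nat * nat => q.2 == i) (x :: t).
Proof.
elim: t x => [|y t IH] x /=; first by move=> _ h; apply/orP; left; apply/eqP; lia.
move=> /andP [/wstepP [h1 h2 _ _] hp] hi.
case: (eqVneq x.2 i) => [e|ne] //=.
apply: (IH y hp); lia.
Qed.

Lemma filter_none (T : Type) (p : pred T) s : all (predC p) s -> filter p s = [::].
Proof. by elim: s => //= x s IH /andP [/negbTE -> /IH]. Qed.

Lemma path_iota1 (x : nat * nat) t j : path wstep x t ->
  let G := map snd [seq q <- x :: t | q.1 == j] in G = iota (head 0%N G) (size G).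
Proof.
elim: t x => [|y t IH] x /=.
  by move=> _; case: eqP.
move=> /andP [hs hp].
have := IH y hp => /=.
case: (eqVneq x.1 j) => [ej|nej] //=.
case: (eqVneq y.1 j) => [ey|ney] /=.
  move=> ->; have [_ _ h _] := wstepP hs; rewrite h ?ey ?ej //.
have [h1 _ _ _] := wstepP hs.
have ey : y.1 = x.1.+1 by lia.
rewrite filter_none //.
move: (path_mono hp); apply: sub_all => q /andP [a _] /=; lia.
Qed.

Lemma path_iota2 (x : nat * nat) t j : path wstep x t ->
  let G := map fst [seq q <- x :: t | q.2 == j] in G = iota (head 0%N G) (size G).
Proof.
elim: t x => [|y t IH] x /=.
  by move=> _; case: eqP.
move=> /andP [hs hp].
have := IH y hp => /=.
case: (eqVneq x.2 j) => [ej|nej] //=.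
case: (eqVneq y.2 j) => [ey|ney] /=.
  move=> ->; have [_ _ _ h] := wstepP hs; rewrite h ?ey ?ej //.
have [_ h1 _ _] := wstepP hs.
have ey : y.2 = x.2.+1 by lia.
rewrite filter_none //.
move: (path_mono hp); apply: sub_all => q /andP [_ a] /=; lia.
Qed.

Lemma foldr_min_le (T : eqType) (f : T -> rat) P Ps Q : Q \in P :: Ps ->
  foldr (fun Q acc => Num.min (f Q) acc) (f P) Ps <= f Q.
Proof.
elim: Ps => [|R Ps IH] /=; first by rewrite inE => /eqP ->.
rewrite !inE => /or3P [] hQ.
- by rewrite ge_min IH ?orbT // inE hQ.
- by rewrite (eqP hQ) ge_min lexx.
- by rewrite ge_min IH ?orbT // inE hQ orbT.
Qed.

Lemma min_has_step (T : eqType) (f : T -> rat) P R Ps v :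
  has (fun Q => v == f Q) (P :: Ps) ->
  has (fun Q => Num.min (f R) v == f Q) (P :: R :: Ps).
Proof.
rewrite /Num.min; case: ifP => h.
  by move=> _; rewrite /= eqxx orbT.
move=> /= /orP [->|->] //; by rewrite !orbT.
Qed.

Lemma foldr_min_has (T : eqType) (f : T -> rat) P Ps :
  has (fun Q => foldr (fun Q acc => Num.min (f Q) acc) (f P) Ps == f Q) (P :: Ps).
Proof.
elim: Ps => [|R Ps IH] /=; first by rewrite eqxx.
exact: (@min_has_step T f P R Ps _ IH).
Qed.

Lemma dtw2_le s s' P : P \in warping_paths (size s) (size s') ->
  dtw2 s s' <= path_cost s s' P.
Proof.
rewrite /dtw2; case: (warping_paths _ _) => [|P0 Ps] //.
exact: foldr_min_le.
Qed.

Lemma dtw2_has s s' : warping_paths (size s) (size s') != [::] ->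
  has (fun P => dtw2 s s' == path_cost s s' P) (warping_paths (size s) (size s')).
Proof.
rewrite /dtw2; case: (warping_paths _ _) => [|P0 Ps] //= _.
exact: (@foldr_min_has _ (path_cost s s') P0 Ps).
Qed.

Lemma gen_paths_mem k x t : path wstep x t -> (size t <= k)%N -> x :: t \in gen_paths k x.
Proof.
elim: k x t => [|k IH] x [|y t] /=.
- by rewrite inE.
- by [].
- by move=> _ _; rewrite inE eqxx.
move=> /andP [hs hp] hsz.
rewrite inE !mem_cat; apply/orP; right.
have hm := IH y t hp hsz.
move: hs; rewrite /wstep.
by case/or3P => /eqP e; rewrite -e (map_f (fun t0 => x :: t0) hm) ?orbT.
Qed.

Lemma exists_path m n : exists t, [/\ path wstep (1, 1)%N t,
  last (1, 1)%N t = (m.+1, n.+1) & size t = (m + n)%N].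
Proof.
elim: m => [|m [t [hp hl hs]]].
  elim: n => [|n [t [hp hl hs]]]; first by exists [::].
  exists (rcons t (1, n.+2))%N; split.
  - by rewrite rcons_path hp hl /wstep /= ?eqxx ?orbT.
  - by rewrite last_rcons.
  - by rewrite size_rcons hs.
exists (rcons t (m.+2, n.+1))%N; split.
- by rewrite rcons_path hp hl /wstep /= ?eqxx ?orbT.
- by rewrite last_rcons.
- by rewrite size_rcons hs.
Qed.

Lemma wp_nonempty m n : (0 < m)%N -> (0 < n)%N -> warping_paths m n != [::].
Proof.
case: m => // m; case: n => // n _ _.
have [t [hp hl hs]] := exists_path m n.
apply/eqP => e.
have : (1, 1)%N :: t \in warping_paths m.+1 n.+1.
  rewrite mem_filter gen_paths_mem ?hs ?andbT; last lia.
  rewrite /is_warping_path eqxx hl eqxx /=.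
  have h1 := path_mono hp; have := path_last_bound hp; rewrite hl /= => h2.
  rewrite hp andbT.
  elim: t h1 h2 {hp hl hs e} => //= q t IH /andP [hq1 ha] /andP [hq2 hb].
  rewrite IH // andbT; lia.
  by [].
by rewrite e.
Qed.

Lemma wp_is m n P : P \in warping_paths m n -> is_warping_path m n P.
Proof. by rewrite mem_filter => /andP []. Qed.

Lemma penalty_ge0 U L x : 0 <= penalty U L x.
Proof. rewrite /penalty; case: ifP => _; first exact: sqr_ge0. case: ifP => _ //; exact: sqr_ge0. Qed.

Lemma penalty_le U L x y : L <= y <= U -> penalty U L x <= (x - y) ^+ 2.
Proof.
move=> /andP [hL hU]; rewrite /penalty.
case: ifP => h1; first by nra.
case: ifP => h2; first by nra.
exact: sqr_ge0.
Qed.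

Lemma sum_undup_le (g : nat -> rat) (s : seq nat) : (forall i, 0 <= g i) ->
  \sum_(i <- undup s) g i <= \sum_(i <- s) g i.
Proof.
move=> g0; elim: s => [|x s IH] //=.
case: ifP => _; rewrite big_cons.
  by apply: le_trans IH _; rewrite lerDr.
by rewrite big_cons lerD2l.
Qed.

Lemma sum_sub_le (g : nat -> rat) (r s : seq nat) : (forall i, 0 <= g i) ->
  uniq r -> {subset r <= s} -> \sum_(i <- r) g i <= \sum_(i <- s) g i.
Proof.
move=> g0 ur sub.
apply: (le_trans _ (@sum_undup_le g s g0)).
rewrite [X in _ <= X](bigID (fun i => i \in r)) /=.
have -> : \sum_(i <- undup s | i \in r) g i = \sum_(i <- r) g i.
  rewrite -big_filter; apply: perm_big; apply: uniq_perm.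
  - by rewrite filter_uniq // undup_uniq.
  - by [].
  move=> i; rewrite mem_filter mem_undup; case: (boolP (i \in r)) => //= ir.
  by rewrite sub.
by rewrite lerDl sumr_ge0.
Qed.

Lemma ler_sum_mem (I : eqType) (r : seq I) (F G : I -> rat) :
  (forall i, i \in r -> F i <= G i) -> \sum_(i <- r) F i <= \sum_(i <- r) G i.
Proof. by move=> h; rewrite big_seq [X in _ <= X]big_seq; apply: ler_sum. Qed.

Lemma lb_first m n P (f : nat * nat -> rat) (g : nat -> rat) :
  is_warping_path m n P -> (forall i, 0 <= g i) ->
  (forall q, q \in P -> g q.1 <= f q) ->
  \sum_(1 <= i < m.+1) g i <= \sum_(q <- P) f q.
Proof.
case: P => [|x t] //= /and4P [/eqP ex /eqP hl ha hp] g0 hf.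
apply: (@le_trans _ _ (\sum_(q <- x :: t) g q.1)); last first.
  by apply: ler_sum_mem => q hq; apply: hf.
rewrite -(big_map fst xpredT g).
apply: sum_sub_le => //; first exact: iota_uniq.
move=> i; rewrite mem_iota => hi.
have := @path_surj1 _ _ i hp; rewrite hl ex => /(_ ltac:(simpl; lia)) /hasP [q hq /eqP <-].
exact: map_f.
Qed.

Lemma lb_second m n P (f : nat * nat -> rat) (g : nat -> rat) :
  is_warping_path m n P -> (forall i, 0 <= g i) ->
  (forall q, q \in P -> g q.2 <= f q) ->
  \sum_(1 <= i < n.+1) g i <= \sum_(q <- P) f q.
Proof.
case: P => [|x t] //= /and4P [/eqP ex /eqP hl ha hp] g0 hf.
apply: (@le_trans _ _ (\sum_(q <- x :: t) g q.2)); last first.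
  by apply: ler_sum_mem => q hq; apply: hf.
rewrite -(big_map snd xpredT g).
apply: sum_sub_le => //; first exact: iota_uniq.
move=> i; rewrite mem_iota => hi.
have := @path_surj2 _ _ i hp; rewrite hl ex => /(_ ltac:(simpl; lia)) /hasP [q hq /eqP <-].
exact: map_f.
Qed.

Lemma wp_surj1 m n P i : is_warping_path m n P -> (1 <= i <= m)%N ->
  has (fun q : nat * nat => q.1 == i) P.
Proof.
case: P => [|x t] //= /and4P [/eqP ex /eqP hl ha hp] hi.
have := @path_surj1 _ _ i hp; rewrite hl ex => /(_ ltac:(simpl; lia)); by [].
Qed.

Lemma wp_iota1 m n P j : is_warping_path m n P ->
  let G := map snd [seq q <- P | q.1 == j] in G = iota (head 0%N G) (size G).
Proof.
case: P => [|x t] //= /and4P [_ _ _ hp].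
exact: (@path_iota1 x t j hp).
Qed.

Lemma wp_bounds m n P q : is_warping_path m n P -> q \in P ->
  (1 <= q.1 <= m)%N && (1 <= q.2 <= n)%N.
Proof.
case: P => [|x t] //; rewrite /is_warping_path => /and4P [_ _ ha _] hq.
exact: (allP ha q hq).
Qed.

Lemma diff_sq (a b : nat) (w : nat -> rat) x c :
  \sum_(a <= i < b) (x - w i) ^+ 2 - \sum_(a <= i < b) (c - w i) ^+ 2 =
  (x ^+ 2 - c ^+ 2) * (b - a)%:R - 2 * (x - c) * \sum_(a <= i < b) w i.
Proof.
rewrite -sumrB.
rewrite (eq_bigr (fun i => (x ^+ 2 - c ^+ 2) - (2 * (x - c)) * w i)); last by move=> i _; ring.
by rewrite sumrB sumr_const_nat -mulr_sumr mulr_natr.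
Qed.

Lemma ts_at_set (z : tseries) j c i : (1 <= i)%N -> (1 <= j)%N ->
  ts_at (set_nth 0 z j.-1 c) i = if i == j then c else ts_at z i.
Proof.
move=> hi hj; rewrite /ts_at nth_set_nth /=.
have -> : (i.-1 == j.-1) = (i == j) by apply/eqP/eqP; lia.
by [].
Qed.

Arguments wp_nonempty {m n}.
Arguments dtw2_has {s s'}.
Arguments wp_is {m n P}.
Arguments wp_iota1 {m n P} j.
Arguments wp_surj1 {m n P i}.
Arguments wp_bounds {m n P q}.
Arguments dtw2_le {s s' P}.
Arguments lb_first {m n P f g}.
Arguments lb_second {m n P f g}.
Arguments ts_at_set {z j c i}.

Theorem mainTheorem1 (k : nat) (s : 'I_k -> tseries) (U L : rat) (z : tseries) :
  (0 < k)%N ->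
  (forall l : 'I_k, (0 < size (s l))%N) ->
  is_U s U -> is_L s L ->
  is_mean s z ->
  (forall j : nat, (1 <= j <= size z)%N -> L <= ts_at z j <= U) /\
  (forall l : 'I_k, lower_bound_l U L (s l) <= dtw2 (s l) z) /\
  k%:R^-1 * \sum_(l < k) lower_bound_l U L (s l) <= frechet s z.
Proof.
move=> hk hs hU hL [hz0 hmin].
have partA : forall j : nat, (1 <= j <= size z)%N -> L <= ts_at z j <= U.
  move=> j /andP [hj1 hj2].
  pose W l := warping_paths (size z) (size (s l)).
  pose pr l := fun P => dtw2 z (s l) == path_cost z (s l) P.
  pose P l := nth [::] (W l) (find (pr l) (W l)).
  have hhas l : has (pr l) (W l) := dtw2_has (wp_nonempty hz0 (hs l)).
  have hPW l : P l \in W l by apply: mem_nth; rewrite -has_find.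
  have hPc l : dtw2 z (s l) = path_cost z (s l) (P l).
    by apply/eqP; exact: (nth_find [::] (hhas l)).
  have hPw l : is_warping_path (size z) (size (s l)) (P l) := wp_is (hPW l).
  pose G l := map snd [seq q <- P l | q.1 == j].
  have hG l : G l = iota (head 0%N (G l)) (size (G l)) := wp_iota1 j (hPw l).
  pose a l := head 0%N (G l).
  pose b l := (a l + size (G l)).-1.
  have hGpos l : (0 < size (G l))%N.
    rewrite size_map size_filter -has_count; apply: wp_surj1 (hPw l) _.
    by rewrite hj1 hj2.
  have hGb l i : i \in G l -> (1 <= i <= size (s l))%N.
    case/mapP => q; rewrite mem_filter => /andP [_ hq] ->.
    by have /andP [_ ->] := wp_bounds (hPw l) hq.
  have hab l : ((b l).+1 - a l)%N = size (G l).
    rewrite /b; have := hGpos l; lia.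
  have ma l : a l \in G l.
    rewrite /a; move: (hGpos l); case: (G l) => //= g0 gs _; exact: mem_head.
  have mb l : b l \in G l.
    rewrite (hG l) mem_iota /b /a; have := hGpos l; lia.
  have hval : valid_intervals s a b.
    move=> l; have := hGb l _ (ma l); have := hGb l _ (mb l).
    rewrite /b; have := hGpos l; lia.
  have hsum l (h : nat -> rat) :
      \sum_(a l <= i < (b l).+1) h i = \sum_(q <- P l | q.1 == j) h q.2.
    transitivity (\sum_(i <- G l) h i); last by rewrite big_map big_filter.
    rewrite /index_iota hab.
    have -> : iota (a l) (size (G l)) = G l by exact: (esym (hG l)).
    by [].
  pose x := ts_at z j.
  pose c := interval_ratio s a b.
  pose z' := set_nth 0 z j.-1 c.
  have hsz' : size z' = size z.
    rewrite /z' size_set_nth prednK //; exact/maxn_idPr.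
  pose w l i := ts_at (s l) i.
  pose R l := \sum_(q <- P l | q.1 != j) (ts_at z q.1 - w l q.2) ^+ 2.
  pose T l y := \sum_(a l <= i < (b l).+1) (y - w l i) ^+ 2.
  have hdec (zz : tseries) y l :
      (forall q, q \in P l -> q.1 != j -> ts_at zz q.1 = ts_at z q.1) ->
      ts_at zz j = y -> path_cost zz (s l) (P l) = R l + T l y.
    move=> h1 h2; rewrite /path_cost (bigID (fun q : nat * nat => q.1 == j)) /= addrC.
    congr (_ + _).
    - rewrite /R big_seq_cond [RHS]big_seq_cond; apply: eq_bigr => q /andP [hq hne].
      by rewrite h1.
    - rewrite /T hsum; apply: eq_bigr => q /eqP ->; by rewrite h2.
  have hz l : dtw2 z (s l) = R l + T l x by rewrite hPc (hdec z x l).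
  have hz' l : dtw2 z' (s l) <= R l + T l c.
    rewrite -(hdec z' c l).
    - apply: dtw2_le; rewrite hsz'; exact: hPW l.
    - move=> q hq hne; have /andP [/andP [hq1 _] _] := wp_bounds (hPw l) hq.
      by rewrite ts_at_set // (negbTE hne).
    - by rewrite ts_at_set // eqxx.
  have hm := hmin z' ltac:(by rewrite hsz').
  rewrite /frechet in hm.
  have hk' : 0 < k%:R^-1 :> rat by rewrite invr_gt0 ltr0n.
  rewrite ler_pM2l // in hm.
  have hsum_le : \sum_(l < k) (R l + T l x) <= \sum_(l < k) (R l + T l c).
    rewrite -(eq_bigr _ (fun l _ => hz l)); apply: le_trans hm _.
    by apply: ler_sum => l _; exact: hz' l.
  rewrite !big_split /= lerD2l in hsum_le.
  pose N := \sum_(l < k) ((b l).+1 - a l)%:R : rat.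
  pose A := \sum_(l < k) \sum_(a l <= i < (b l).+1) w l i.
  have hN : 0 < N.
    rewrite /N (bigD1 (Ordinal hk)) //=.
    have h1 : 0 < ((b (Ordinal hk)).+1 - a (Ordinal hk))%:R :> rat.
      by rewrite ltr0n hab hGpos.
    have h2 : 0 <= \sum_(i < k | i != Ordinal hk) ((b i).+1 - a i)%:R :> rat.
      by apply: sumr_ge0 => i _; exact: ler0n.
    lra.
  have hN0 : N != 0 by rewrite gt_eqF.
  have hcN : c * N = A by rewrite /c /interval_ratio; exact: (divfK hN0).
  have hdiff : \sum_(l < k) T l x - \sum_(l < k) T l c =
      (x ^+ 2 - c ^+ 2) * N - 2 * (x - c) * A.
    rewrite -sumrB (eq_bigr _ (fun l _ => diff_sq (a l) (b l).+1 (w l) x c)).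
    by rewrite sumrB -!mulr_sumr.
  have hle : (x - c) ^+ 2 * N <= 0.
    have -> : (x - c) ^+ 2 * N = (x ^+ 2 - c ^+ 2) * N - 2 * (x - c) * A.
      by rewrite -hcN; ring.
    by rewrite -hdiff subr_le0.
  rewrite pmulr_lle0 // in hle.
  have xc : x = c.
    have h0 : (x - c) ^+ 2 = 0 by apply/eqP; rewrite eq_le hle sqr_ge0.
    by apply/eqP; rewrite -subr_eq0 -sqrf_eq0 h0.
  rewrite -/x xc; apply/andP; split; [exact: hL.2 a b hval | exact: hU.2 a b hval].
split; first exact: partA.
have hlb1 l : lower_bound_l U L (s l) <= dtw2 (s l) z.
  have hne := wp_nonempty (hs l) hz0.
  have /hasP [P hPW /eqP ->] := dtw2_has hne.
  rewrite /lower_bound_l /path_cost.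
  apply: (lb_first (wp_is hPW)) => [i|q hq]; first exact: penalty_ge0.
  apply: penalty_le; apply: partA.
  by case/andP: (wp_bounds (wp_is hPW) hq) => _ /andP [-> ->].
have hlb2 l : lower_bound_l U L (s l) <= dtw2 z (s l).
  have hne := wp_nonempty hz0 (hs l).
  have /hasP [P hPW /eqP ->] := dtw2_has hne.
  rewrite /lower_bound_l /path_cost.
  apply: (lb_second (wp_is hPW)) => [i|q hq]; first exact: penalty_ge0.
  rewrite -sqrrN opprB.
  apply: penalty_le; apply: partA.
  by case/andP: (wp_bounds (wp_is hPW) hq) => /andP [-> ->] _.
split; first exact: hlb1.
rewrite /frechet ler_pM2l ?invr_gt0 ?ltr0n //.
by apply: ler_sum => l _; exact: hlb2 l.
Qed.
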